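(* Suppose that for every binary relation $R$ on $\mathbb{N}$, every $R$-strongly normalizing element of $\mathbb{N}$ is $R$-weakly normalizing. Then the law of excluded middle holds: for every proposition $P$, $P\lor\lnot P$.
   Context: Work in constructive (intuitionistic) logic / Martin-Löf type theory (Agda) without excluded middle or other axioms. For a relation $R$ on a set $A$ write $a\to b$ for $R\,a\,b$ and $\to^*$ for its reflexive–transitive closure. $a$ is a normal form iff there is no $b$ with $a\to b$. $a$ is weakly normalizing iff $a\to^* b$ for some normal form $b$. Strong normalization is defined inductively: $a$ is strongly normalizing if every $b$ with $a\to b$ is strongly normalizing. *)

(* Defs.v *)
Inductive rtc {A : Type} (R : A -> A -> Prop) : A -> A -> Prop :=
| rtc_refl : forall a, rtc R a a
| rtc_step : forall a b c, R a b -> rtc R b c -> rtc R a c.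

Definition normal_form {A : Type} (R : A -> A -> Prop) (a : A) : Prop :=
  ~ (exists b, R a b).

Definition weakly_normalizing {A : Type} (R : A -> A -> Prop) (a : A) : Prop :=
  exists b, rtc R a b /\ normal_form R b.

Inductive strongly_normalizing {A : Type} (R : A -> A -> Prop) : A -> Prop :=
| sn_intro : forall a, (forall b, R a b -> strongly_normalizing R b) ->
             strongly_normalizing R a.

(* Main.v *)
Require Import Defs.

Theorem mainTheorem12 :
  (forall (R : nat -> nat -> Prop) (a : nat),
      strongly_normalizing R a -> weakly_normalizing R a) ->
  forall P : Prop, P \/ ~ P.
Proof.
  intros H P.
  set (R := fun a b : nat => a = 0 /\ b = 1 /\ P).
  assert (Hsn : strongly_normalizing R 0).
  { constructor. intros b [_ [Hb _]]. subst b.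
    constructor. intros c [Hc _]. discriminate. }
  destruct (H R 0 Hsn) as [b [Hr Hn]].
  inversion Hr as [a Ha Hb | a b' c Hab Hrest Ha Hc].
  - right. intro p. apply Hn. exists 1. subst. unfold R. auto.
  - left. destruct Hab as [_ [_ p]]. exact p.
Qed.
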